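(* Let $d\ge 0$ and $n>d$ be integers, and let $T\in L(n,d)$ with $T\neq\emptyset$. Then the poset ideal $\mathcal{I}_{n,d}(T)$ is isomorphic as a poset to the direct product $\prod_{T_i\in T}\mathcal{I}_{n,d}(\{T_i\})$, and both are isomorphic as posets to $\prod_{T_i\in T} L(n-|T_i|,\,d-|T_i|)$.
   Context: For a finite set $X$ let $\operatorname{codim}_d(X)=d+1-|X|$. For a finite collection $\{T_1,\dots,T_l\}$ of pairwise distinct finite sets put $\rho_d(\{T_1,\dots,T_l\})=\sum_{i=1}^l\operatorname{codim}_d(T_i)$ (with $\rho_d(\emptyset)=0$) and $D_d(\{T_1,\dots,T_l\})=\operatorname{codim}_d(T_1\cap\cdots\cap T_l)-\rho_d(\{T_1,\dots,T_l\})$. For integers $d\ge0$, $n>d$, $L(n,d)$ is the set of all collections $T$ of subsets of $\{1,\dots,n\}$ such that (i) $D_d(T')>0$ for every $T'\subset T$ with $|T'|>1$, and (ii) $0\le|T_i|\le d$ for every $T_i\in T$ (so $L(n,0)=\{\emptyset,\{\emptyset\}\}$). It is partially ordered by: $T<T'$ iff $\rho_d(T)<\rho_d(T')$ and for every $T_i\in T$ there exists $T'_j\in T'$ with $T'_j\subset T_i$; $T\le T'$ means $T<T'$ or $T=T'$. For $T\in L(n,d)$, $\mathcal{I}_{n,d}(T)=\{S\in L(n,d): S\le T\}$ with the induced order. Direct products of posets carry the componentwise order. *)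

(* Defs.v *)
From HB Require Import structures.
From mathcomp Require Import all_boot all_order all_algebra.
Set Implicit Arguments. Unset Strict Implicit. Unset Printing Implicit Defensive.
Import Order.TTheory GRing.Theory Num.Theory.
Local Open Scope ring_scope.

Section LDefs.
Variable U : finType.

Definition codim (d : nat) (X : {set U}) : int := (d.+1)%:Z - (#|X|)%:Z.

Definition rho (d : nat) (C : {set {set U}}) : int := \sum_(S in C) codim d S.

Definition Dd (d : nat) (C : {set {set U}}) : int :=
  codim d (\bigcap_(S in C) S) - rho d C.

(* membership in L(n,d), with ground set U (= 'I_n for {1,...,n}) *)
Definition inL (d : nat) (C : {set {set U}}) : bool :=
  [forall C' : {set {set U}}, ((C' \subset C) && (1 < #|C'|)%N) ==> (0 < Dd d C')]
  && [forall S in C, (#|S| <= d)%N].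

Definition ltL (d : nat) (C C' : {set {set U}}) : bool :=
  (rho d C < rho d C') && [forall S in C, exists S' in C', S' \subset S].

Definition leL (d : nat) (C C' : {set {set U}}) : bool := ltL d C C' || (C == C').

Definition idealL (d : nat) (T : {set {set U}}) : pred {set {set U}} :=
  [pred C | inL d C && leL d C T].
End LDefs.

Definition poset_iso (X Y : Type) (A : X -> bool) (leA : X -> X -> bool)
    (B : Y -> bool) (leB : Y -> Y -> bool) : Prop :=
  exists f : X -> Y,
    [/\ (forall x, A x -> B (f x)),
        (forall x y, A x -> A y -> f x = f y -> x = y),
        (forall y, B y -> exists2 x, A x & f x = y) &
        (forall x y, A x -> A y -> (leA x y = leB (f x) (f y)))].

(* Product  prod_{T_i in T} I_{n,d}({T_i}): functions indexed by the members
   of T (value set0 off T), with componentwise order. *)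
Definition prodI (n d : nat) (T : {set {set 'I_n}}) :
    pred {ffun {set 'I_n} -> {set {set 'I_n}}} :=
  [pred g : {ffun {set 'I_n} -> {set {set 'I_n}}} | [forall S, if S \in T then g S \in idealL d [set S] else g S == set0]].

Definition prodI_le (n d : nat) (T : {set {set 'I_n}})
    (g h : {ffun {set 'I_n} -> {set {set 'I_n}}}) : bool :=
  [forall S in T, leL d (g S) (h S)].

(* Product  prod_{T_i in T} L(n - |T_i|, d - |T_i|), the factor at T_i living
   on the ground set 'I_(n - |T_i|). *)
Definition prodLtype (n : nat) :=
  {dffun forall S : {set 'I_n}, {set {set 'I_(n - #|S|)}}}.

Definition prodL (n d : nat) (T : {set {set 'I_n}}) : pred (prodLtype n) :=
  [pred g : prodLtype n | [forall S, if S \in T then inL (d - #|S|) (g S) else g S == set0]].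

Definition prodL_le (n d : nat) (T : {set {set 'I_n}}) (g h : prodLtype n) : bool :=
  [forall S in T, leL (d - #|S|) (g S) (h S)].

(* Main.v *)
Require Import Defs.
From HB Require Import structures.
From mathcomp Require Import all_boot all_order all_algebra zify.
Set Implicit Arguments. Unset Strict Implicit. Unset Printing Implicit Defensive.
Import Order.TTheory GRing.Theory Num.Theory.
Local Open Scope ring_scope.

Section Gen.
Variable U : finType.
Implicit Types C D : {set {set U}}.

Definition sz C := (\sum_(X in C) #|X|)%N.
Definition Dpos d C := (#|\bigcap_(X in C) X| + #|C| * d.+1 < sz C + d.+1)%N.
Definition cont C D := [forall X in C, exists Y in D, Y \subset X].

Lemma sumPosz (C : {set {set U}}) (F : {set U} -> nat) :
  (\sum_(X in C) (F X)%:Z)%R = (\sum_(X in C) F X)%N%:Z.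
Proof. by rewrite (big_morph Posz PoszD (erefl _)). Qed.

Lemma rhoE d C : rho d C = ((#|C| * d.+1)%:Z - (sz C)%:Z)%R.
Proof.
rewrite /rho /codim sumrB sumr_const sumPosz /sz.
by rewrite -mulr_natr natz -PoszM mulnC.
Qed.

Lemma DdposE d C : (0 < Dd d C)%R = Dpos d C.
Proof.
rewrite /Dd rhoE /codim /Dpos.
set a := #|_|; set b := (#|C| * d.+1)%N; set s := sz C.
apply/idP/idP => H; lia.
Qed.

Lemma inL_Dpos d C C' : inL d C -> C' \subset C -> (1 < #|C'|)%N -> Dpos d C'.
Proof.
case/andP => /forallP H _ sC lt1; rewrite -DdposE.
by have := H C'; rewrite sC lt1.
Qed.

Lemma inL_size d C X : inL d C -> X \in C -> (#|X| <= d)%N.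
Proof. by case/andP => _ /forallP H XC; have := H X; rewrite XC. Qed.

Lemma inL_intro d C : (forall C', C' \subset C -> (1 < #|C'|)%N -> Dpos d C') ->
  (forall X, X \in C -> (#|X| <= d)%N) -> inL d C.
Proof.
move=> H1 H2; apply/andP; split; apply/forallP => C'.
  by apply/implyP => /andP [s l]; rewrite DdposE; apply: H1.
by apply/implyP => XC; apply: H2.
Qed.

Lemma inL_sub d C C' : inL d C -> C' \subset C -> inL d C'.
Proof.
move=> H s; apply: inL_intro => [C'' s' l|X XC]; first exact: inL_Dpos H (subset_trans s' s) l.
by apply: inL_size H (subsetP s X XC).
Qed.

Lemma szE1 (X : {set U}) : sz [set X] = #|X|.
Proof. by rewrite /sz big_set1. Qed.

Lemma W_ineq d C (G : {set {set U}}) (Y : {set U}) : inL d C -> G \subset C -> G != set0 ->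
  (forall X, X \in G -> Y \subset X) ->
  (#|G| * d.+1 + #|Y| + (G != [set Y]) <= sz G + d.+1)%N.
Proof.
move=> HC sG nG YG.
have b1 := leq_b1 (G != [set Y]).
case: (ltngtP #|G| 1) => [|lt1|/eqP/cards1P [X GX]].
- by rewrite ltnS leqn0 cards_eq0 (negbTE nG).
- have := inL_Dpos HC sG lt1; rewrite /Dpos.
  have : (#|Y| <= #|\bigcap_(X in G) X|)%N.
    by apply: subset_leq_card; apply/bigcapsP.
  set p := (#|G| * d.+1)%N; lia.
- have YX : Y \subset X by apply: YG; rewrite GX set11.
  rewrite GX szE1 cards1 mul1n.
  case: (eqVneq X Y) => [->|neq]; first by rewrite eqxx addn0 addnC.
  have : (#|Y| < #|X|)%N by apply: proper_card; rewrite properEneq eq_sym neq.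
  rewrite GX in b1; lia.
Qed.

Lemma cont_lt d C D : inL d C -> (forall Y, Y \in D -> (#|Y| <= d)%N) ->
  cont C D -> C != D -> (#|C| * d.+1 + sz D < #|D| * d.+1 + sz C)%N.
Proof.
move=> HC HD /forallP cCD nCD.
pose phi (X : {set U}) := odflt X [pick Y in D | Y \subset X].
have phiP X : X \in C -> (phi X \in D) && (phi X \subset X).
  move=> XC; have := cCD X; rewrite XC /= => /existsP [Y /andP [YD YX]].
  rewrite /phi; case: pickP => [Z /andP [ZD ZX]|/(_ Y)]; first by rewrite ZD ZX.
  by rewrite YD YX.
pose G (Y : {set U}) := [set X in C | phi X == Y].
have sGC Y : G Y \subset C by apply/subsetP => X; rewrite inE => /andP [].
have cardC : #|C| = (\sum_(Y in D) #|G Y|)%N.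
  rewrite -sum1_card (partition_big phi (mem D)) /=; last by move=> X /phiP /andP [].
  apply: eq_bigr => Y _; rewrite -sum1_card; apply: eq_bigl => X; by rewrite inE.
have szC : sz C = (\sum_(Y in D) sz (G Y))%N.
  rewrite /sz (partition_big phi (mem D)) /=; last by move=> X /phiP /andP [].
  apply: eq_bigr => Y _; apply: eq_bigl => X; by rewrite inE.
pose bf (Y : {set U}) : nat := G Y != [set Y].
have perY Y : Y \in D ->
    (#|G Y| * d.+1 + #|Y| + bf Y <= sz (G Y) + d.+1)%N.
  move=> YD; rewrite /bf; case: (eqVneq (G Y) set0) => [->|nG].
    have := HD Y YD; rewrite cards0 mul0n /sz big_set0.
    have -> : (set0 != [set Y]) by apply/eqP => /setP/(_ Y); rewrite !inE eqxx.
    lia.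
  apply: W_ineq HC (sGC Y) nG _ => X; rewrite inE => /andP [XC /eqP <-].
  by case/andP: (phiP X XC).
have [Y0 Y0D bY0] : exists2 Y0, Y0 \in D & G Y0 != [set Y0].
  case: (boolP (D \subset C)) => [sDC|/subsetPn [Y YD YC]].
    have : ~~ (C \subset D) by move: nCD; rewrite eqEsubset sDC andbT.
    case/subsetPn => X XC XD; exists (phi X); first by case/andP: (phiP X XC).
    apply/eqP => GE; have : X \in G (phi X) by rewrite inE XC eqxx.
    rewrite GE inE => /eqP EX; by move: (phiP X XC); rewrite -EX (negbTE XD).
  exists Y => //; apply/eqP => GE; have : Y \in G Y by rewrite GE set11.
  by move/(subsetP (sGC Y)); rewrite (negbTE YC).
have Hs := leq_sum (index_enum _) perY.
rewrite !big_split /= -big_distrl /= -cardC -szC in Hs.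
have Hb : (1 <= \sum_(Y in D) bf Y)%N by rewrite (bigD1 Y0) //= /bf bY0.
rewrite sum_nat_const in Hs.
move: Hs Hb; rewrite /sz.
set a := (\sum_(i in D) #|i|)%N.
set p := (#|C| * d.+1)%N. set q := (#|D| * d.+1)%N. set b := (\sum_(i in D) bf i)%N.
lia.
Qed.


Lemma cont_refl C : cont C C.
Proof. by apply/forallP => X; apply/implyP => XC; apply/existsP; exists X; rewrite XC subxx. Qed.

Lemma leL_cont d C D : inL d C -> inL d D -> leL d C D = cont C D.
Proof.
move=> HC HD; rewrite /leL; case: (eqVneq C D) => [->|neq]; first by rewrite orbT cont_refl.
rewrite orbF /ltL; rewrite -/(cont C D); case cCD: (cont C D); last by rewrite andbF.
rewrite andbT !rhoE.
have := cont_lt HC (fun Y YD => inL_size HD YD) cCD neq.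
set p := (#|C| * d.+1)%N; set q := (#|D| * d.+1)%N; move=> H; lia.
Qed.

Lemma uniqT d T (S S' X : {set U}) : inL d T -> S \in T -> S' \in T ->
  S \subset X -> S' \subset X -> (#|X| <= d)%N -> S = S'.
Proof.
move=> HT ST S'T SX S'X Xd; apply/eqP; apply/negPn/negP => neq.
have s2 : [set S; S'] \subset T by apply/subsetP => Z; rewrite !inE => /orP [] /eqP ->.
have := inL_Dpos HT s2; rewrite cards2 neq /Dpos => /(_ isT).
rewrite /sz big_setU1 /= ?inE // big_set1 big_setU1 /= ?inE // big_set1 cards2 neq.
have := cardsUI S S'.
have : (#|S :|: S'| <= #|X|)%N by apply: subset_leq_card; rewrite subUset SX S'X.
lia.
Qed.


Lemma card_bigcup_le (I : finType) (P : pred I) (B : I -> {set U}) :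
  (#|\bigcup_(i | P i) B i| <= \sum_(i | P i) #|B i|)%N.
Proof.
apply: (big_rec2 (fun (A : {set U}) (m : nat) => #|A| <= m)%N); first by rewrite cards0.
move=> i A m _ IH; apply: leq_trans (leq_card_setU _ _) _; by rewrite leq_add2l.
Qed.

Lemma mono_cap (I : finType) (P : {set I}) (F G : I -> {set U}) :
  (forall i, i \in P -> F i \subset G i) ->
  (\sum_(i in P) #|F i| + #|\bigcap_(i in P) G i|
     <= \sum_(i in P) #|G i| + #|\bigcap_(i in P) F i|)%N.
Proof.
move=> FG.
set GX := \bigcap_(i in P) G i; set FX := \bigcap_(i in P) F i.
have e1 := cardsID FX GX.
have h1 : (#|GX :&: FX| <= #|FX|)%N by apply: subset_leq_card; apply: subsetIr.
have h2 : (#|GX :\: FX| <= \sum_(i in P) #|G i :\: F i|)%N.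
  apply: leq_trans (card_bigcup_le _ _) ; apply: subset_leq_card.
  apply/subsetP => x; rewrite inE => /andP [/bigcapP nF /bigcapP inG].
  apply/bigcupP; have [i iP xFi] : exists2 i, i \in P & x \notin F i.
    have : ~~ [forall (i | i \in P), x \in F i] by apply/negP => /forall_inP H; apply: nF.
    by rewrite negb_forall_in => /exists_inP.
  by exists i => //; rewrite inE xFi inG.
have e2 : (\sum_(i in P) #|G i| = \sum_(i in P) #|F i| + \sum_(i in P) #|G i :\: F i|)%N.
  rewrite -big_split /=; apply: eq_bigr => i iP; rewrite -(cardsID (F i) (G i)).
  by move/setIidPr: (FG i iP) => ->.
lia.
Qed.

Lemma union_inL d T (g : {set U} -> {set {set U}}) : inL d T ->
  (forall S, S \in T -> inL d (g S)) ->
  (forall S X, S \in T -> X \in g S -> S \subset X) ->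
  inL d (\bigcup_(S in T) g S).
Proof.
move=> HT Hg Hsub; set C := \bigcup_(S in T) g S.
have memC X : X \in C -> exists2 S, S \in T & X \in g S by move/bigcupP.
have szX X : X \in C -> (#|X| <= d)%N.
  by case/memC => S ST XgS; apply: inL_size (Hg S ST) XgS.
apply: inL_intro => // R sR lt1.
pose pS (X : {set U}) := odflt set0 [pick S in T | S \subset X].
have pSU X S : X \in R -> S \in T -> S \subset X -> pS X = S.
  move=> XR ST SX; rewrite /pS; case: pickP => [S' /andP [S'T S'X]|/(_ S)]; last by rewrite ST SX.
  by apply: uniqT HT S'T ST S'X SX (szX X (subsetP sR X XR)).
have pSP X : X \in R -> [/\ pS X \in T, pS X \subset X & X \in g (pS X)].
  move=> XR; case: (memC X (subsetP sR X XR)) => S ST XgS.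
  by rewrite (pSU X S XR ST (Hsub S X ST XgS)); split => //; apply: Hsub XgS.
pose I := [set pS X | X in R].
have sIT : I \subset T by apply/subsetP => S /imsetP [X XR ->]; case: (pSP X XR).
case: (leqP #|I| 1) => [le1|gt1].
  have [X0 X0R] : exists X0, X0 \in R by apply/card_gt0P; apply: ltnW.
  have sRg : R \subset g (pS X0).
    apply/subsetP => X XR; case: (pSP X XR) => _ _.
    by rewrite (card_le1_eqP le1 (pS X) (pS X0)) // imset_f.
  exact: inL_Dpos (Hg _ (subsetP sIT _ (imset_f _ X0R))) sRg lt1.
pose RS S := [set X in R | pS X == S].
pose XS S := \bigcap_(X in RS S) X.
have cardR : #|R| = (\sum_(S in I) #|RS S|)%N.
  rewrite -sum1_card (partition_big pS (mem I)) /=; last by move=> X XR; apply: imset_f.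
  apply: eq_bigr => S _; rewrite -sum1_card; apply: eq_bigl => X; by rewrite inE.
have szR : sz R = (\sum_(S in I) sz (RS S))%N.
  rewrite /sz (partition_big pS (mem I)) /=; last by move=> X XR; apply: imset_f.
  apply: eq_bigr => S _; apply: eq_bigl => X; by rewrite inE.
have perS S : S \in I -> (#|RS S| * d.+1 + #|XS S| <= sz (RS S) + d.+1)%N.
  case/imsetP => X0 X0R ->.
  have sRg : RS (pS X0) \subset g (pS X0).
    by apply/subsetP => X; rewrite inE => /andP [XR /eqP <-]; case: (pSP X XR).
  have ne : RS (pS X0) != set0 by apply/set0Pn; exists X0; rewrite inE X0R eqxx.
  have := W_ineq (Hg _ (subsetP sIT _ (imset_f _ X0R))) sRg ne (Y := XS (pS X0)).
  move=> H; apply: leq_trans (H _); first by rewrite leq_addr.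
  by move=> X XR; apply: bigcap_inf.
have Hs := leq_sum (index_enum _) perS.
rewrite !big_split /= -big_distrl /= -cardR -szR sum_nat_const in Hs.
have Hm : (\sum_(S in I) #|S| + #|\bigcap_(S in I) XS S|
     <= \sum_(S in I) #|XS S| + #|\bigcap_(S in I) S|)%N.
  apply: (mono_cap (F := id) (G := XS)) => S _ /=; apply/bigcapsP => X.
  by rewrite inE => /andP [XR /eqP <-]; case: (pSP X XR).
have capR : \bigcap_(X in R) X = \bigcap_(S in I) XS S.
  apply/setP => x; apply/bigcapP/bigcapP => H.
    by move=> S SI; apply/bigcapP => X; rewrite inE => /andP [XR _]; apply: H.
  move=> X XR; have := H (pS X) (imset_f _ XR); move/bigcapP; apply.
  by rewrite inE XR eqxx.
have HI := inL_Dpos HT sIT gt1.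
move: HI Hs Hm; rewrite /Dpos capR /sz.
set p := (#|R| * d.+1)%N; set q := (#|I| * d.+1)%N.
set a1 := #|\bigcap_(S in I) S|. set a2 := (\sum_(S in I) #|S|)%N. set a3 := (\sum_(S in I) #|XS S|)%N. set a4 := #|\bigcap_(S in I) XS S|. lia.
Qed.

End Gen.

Section Transport.
Variables (U V : finType) (A : {set U}) (e : V -> U).
Hypotheses (e_inj : injective e) (e_out : forall v, e v \notin A)
  (e_sur : forall u, u \notin A -> exists v, e v = u).

Definition hh (X : {set U}) : {set V} := e @^-1: X.
Definition gg (Y : {set V}) : {set U} := A :|: e @: Y.

Lemma hg (Y : {set V}) : hh (gg Y) = Y.
Proof.
apply/setP => v; rewrite !inE (negbTE (e_out v)) /=.
by rewrite mem_imset.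
Qed.

Lemma gh (X : {set U}) : A \subset X -> gg (hh X) = X.
Proof.
move=> AX; apply/setP => u; rewrite !inE.
case: (boolP (u \in A)) => [uA|uA] /=; first by rewrite (subsetP AX u uA).
have [v <-] := e_sur uA; by rewrite mem_imset // inE.
Qed.

Lemma card_h (X : {set U}) : A \subset X -> (#|hh X| + #|A| = #|X|)%N.
Proof.
move=> AX; rewrite -{2}(gh AX) /gg cardsU.
have -> : A :&: [set e x | x in hh X] = set0.
  apply/setP => u; rewrite !inE; apply/andP => [[uA /imsetP [v _ ev]]].
  by move: (e_out v); rewrite -ev uA.
by rewrite cards0 subn0 card_imset // addnC.
Qed.

Lemma sub_h (X X' : {set U}) : A \subset X -> A \subset X' -> (hh X \subset hh X') = (X \subset X').
Proof.
move=> AX AX'; apply/idP/idP => H; last by apply: preimsetS.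
rewrite -(gh AX) -(gh AX') /gg; apply: setUS; exact: imsetS.
Qed.

Lemma cap_h (C : {set {set U}}) :
  \bigcap_(Y in [set hh X | X in C]) Y = hh (\bigcap_(X in C) X).
Proof.
apply/setP => v; rewrite inE; apply/bigcapP/bigcapP => H.
  by move=> X XC; have := H (hh X) (imset_f _ XC); rewrite inE.
by move=> Y /imsetP [X XC ->]; rewrite inE; apply: H.
Qed.

Lemma inj_h (C : {set {set U}}) : (forall X, X \in C -> A \subset X) ->
  {in C &, injective hh}.
Proof. by move=> H X X' XC X'C E; rewrite -(gh (H X XC)) E gh // H. Qed.

Lemma gh_coll (D : {set {set U}}) : (forall X, X \in D -> A \subset X) ->
  [set gg Y | Y in [set hh X | X in D]] = D.
Proof.
move=> H; rewrite -imset_comp -{2}(imset_id D); apply: eq_in_imset => X XD /=.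
exact: gh (H X XD).
Qed.

Lemma hg_coll (E : {set {set V}}) : [set hh Y | Y in [set gg X | X in E]] = E.
Proof.
rewrite -imset_comp -{2}(imset_id E); apply: eq_in_imset => X XD /=; exact: hg.
Qed.

Lemma gg_sup (Y : {set V}) : A \subset gg Y.
Proof. exact: subsetUl. Qed.

Lemma inL_h d (D : {set {set U}}) : (#|A| <= d)%N -> (forall X, X \in D -> A \subset X) ->
  inL (d - #|A|) [set hh X | X in D] = inL d D.
Proof.
move=> Ad HD.
have key (C : {set {set U}}) : C \subset D -> Dpos (d - #|A|) [set hh X | X in C] = Dpos d C
     /\ #|[set hh X | X in C]| = #|C|.
  move=> sCD; have HC : forall X, X \in C -> A \subset X by move=> X /(subsetP sCD); apply: HD.
  have ic := inj_h HC.
  rewrite /Dpos cap_h card_in_imset // /sz big_imset //; split => //.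
  have e1 := card_h (X := \bigcap_(X in C) X) (introT bigcapsP (fun X XC => HC X XC)).
  have e2 : (\sum_(X in C) #|hh X| + #|C| * #|A| = \sum_(X in C) #|X|)%N.
    rewrite -sum_nat_const -big_split /=; apply: eq_bigr => X XC; exact: card_h (HC X XC).
  have e3 : (#|C| * (d - #|A|).+1 + #|C| * #|A| = #|C| * d.+1)%N.
    by rewrite -mulnDr; congr (_ * _)%N; lia.
  move: e1 e2 e3.
  set a := #|hh _|; set b := #|\bigcap_(X in C) X|.
  set s1 := (\sum_(X in C) #|hh X|)%N; set s2 := (\sum_(X in C) #|X|)%N.
  set p := (#|C| * (d - #|A|).+1)%N; set q := (#|C| * #|A|)%N; set r := (#|C| * d.+1)%N.
  move=> e1 e2 e3; apply/idP/idP; lia.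
have szk (X : {set U}) : X \in D -> (#|hh X| <= d - #|A|)%N = (#|X| <= d)%N.
  move=> XD; have := card_h (HD X XD); move=> E; apply/idP/idP; lia.
apply/idP/idP => H.
  apply: inL_intro => [C' sC' lt1|X XD].
    have [<- Ec] := key C' sC'; apply: inL_Dpos H _ _; first exact: imsetS.
    by rewrite Ec.
  by rewrite -szk //; apply: inL_size H (imset_f _ XD).
apply: inL_intro => [C' sC' lt1|Y /imsetP [X XD ->]]; last by rewrite szk //; apply: inL_size H XD.
have sgD : [set gg Y | Y in C'] \subset D.
  apply/subsetP => X /imsetP [Y YC' ->].
  by have /imsetP [Z ZD ->] := subsetP sC' Y YC'; rewrite gh // HD.
have [Hk Ec] := key _ sgD; rewrite hg_coll in Hk Ec.
rewrite Hk; apply: inL_Dpos H sgD _; by rewrite -Ec.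
Qed.

Lemma cont_h (D D' : {set {set U}}) : (forall X, X \in D -> A \subset X) ->
  (forall X, X \in D' -> A \subset X) ->
  cont [set hh X | X in D] [set hh X | X in D'] = cont D D'.
Proof.
move=> HD HD'; apply/idP/idP => /forall_inP H; apply/forall_inP.
  move=> X XD; have /exists_inP [Y' /imsetP [Y YD' ->] sub] := H (hh X) (imset_f _ XD).
  by apply/exists_inP; exists Y; [exact: YD' | rewrite -(sub_h (HD' Y YD') (HD X XD))].
move=> Z /imsetP [X XD ->]; have := H X XD; case/exists_inP => Y YD' sub.
by apply/exists_inP; exists (hh Y); [exact: imset_f | rewrite (sub_h (HD' Y YD') (HD X XD))].
Qed.

End Transport.

Lemma cardC_eq n (S : {set 'I_n}) : #|~: S| = (n - #|S|)%N.
Proof. have := cardsC S; rewrite card_ord; lia. Qed.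

Definition eS n (S : {set 'I_n}) (v : 'I_(n - #|S|)) : 'I_n :=
  enum_val (A := ~: S) (cast_ord (esym (cardC_eq S)) v).

Lemma eS_inj n (S : {set 'I_n}) : injective (@eS n S).
Proof. by move=> v w /enum_val_inj /cast_ord_inj. Qed.

Lemma eS_out n (S : {set 'I_n}) v : @eS n S v \notin S.
Proof. by have := enum_valP (cast_ord (esym (cardC_eq S)) v); rewrite inE. Qed.

Lemma eS_sur n (S : {set 'I_n}) u : u \notin S -> exists v, @eS n S v = u.
Proof.
move=> uS; have uC : u \in ~: S by rewrite inE.
exists (cast_ord (cardC_eq S) (enum_rank_in uC u)).
by rewrite /eS cast_ordK enum_rankK_in.
Qed.

Lemma poset_iso_trans (X Y Z : Type) (A : X -> bool) leA (B : Y -> bool) leB (C : Z -> bool) leC :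
  poset_iso A leA B leB -> poset_iso B leB C leC -> poset_iso A leA C leC.
Proof.
case=> f [f1 f2 f3 f4]; case=> g [g1 g2 g3 g4]; exists (g \o f); split => /=.
- by move=> x /f1 /g1.
- by move=> x y Ax Ay /(g2 _ _ (f1 _ Ax) (f1 _ Ay)) /(f2 _ _ Ax Ay).
- move=> z /g3 [y By <-]; have [x Ax <-] := f3 y By; by exists x.
- by move=> x y Ax Ay; rewrite f4 // g4 // f1.
Qed.

Lemma single_inL (U : finType) d (S : {set U}) : (#|S| <= d)%N -> inL d [set S].
Proof.
move=> Sd; apply: inL_intro => [C' sC' lt1|X]; last by rewrite inE => /eqP ->.
by have := subset_leq_card sC'; rewrite cards1; lia.
Qed.

Lemma cont1 (U : finType) (D : {set {set U}}) S : cont D [set S] = [forall X in D, S \subset X].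
Proof.
apply/forall_inP/forall_inP => H X XD.
  by case/exists_inP: (H X XD) => Y; rewrite inE => /eqP ->.
by apply/exists_inP; exists S; rewrite ?set11 ?H.
Qed.

Lemma idealE (U : finType) d (T C : {set {set U}}) : inL d T ->
  idealL d T C = inL d C && cont C T.
Proof. move=> HT; rewrite /idealL /=; case HC: (inL d C) => //=; rewrite leL_cont // HC. Qed.

Lemma idealE1 (U : finType) d (S : {set U}) (D : {set {set U}}) : (#|S| <= d)%N ->
  (D \in idealL d [set S]) = inL d D && [forall X in D, S \subset X].
Proof. move=> Sd; rewrite /idealL inE /=; case HD: (inL d D) => //=; by rewrite leL_cont ?cont1 ?HD ?single_inL. Qed.

Section Main.
Variables (n d : nat) (T : {set {set 'I_n}}).
Hypothesis HT : inL d T.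

Lemma Td S : S \in T -> (#|S| <= d)%N.
Proof. exact: inL_size HT. Qed.

Lemma prodI_get (g : {ffun {set 'I_n} -> {set {set 'I_n}}}) S : prodI d T g -> S \in T ->
  inL d (g S) /\ (forall X, X \in g S -> S \subset X).
Proof.
move=> /forallP /(_ S) H ST; move: H; rewrite ST idealE1 ?Td // => /andP [H1 /forall_inP H2].
by split.
Qed.

Lemma prodI_out (g : {ffun {set 'I_n} -> {set {set 'I_n}}}) S : prodI d T g -> S \notin T ->
  g S = set0.
Proof. by move=> /forallP /(_ S) H ST; move: H; rewrite (negbTE ST) => /eqP. Qed.

Lemma prodL_get (y : prodLtype n) S : prodL d T y -> S \in T -> inL (d - #|S|) (y S).
Proof. by move=> /forallP /(_ S) H ST; move: H; rewrite ST. Qed.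

Lemma prodL_out (y : prodLtype n) S : prodL d T y -> S \notin T -> y S = set0.
Proof. by move=> /forallP /(_ S) H ST; move: H; rewrite (negbTE ST) => /eqP. Qed.

Definition f1 (C : {set {set 'I_n}}) : {ffun {set 'I_n} -> {set {set 'I_n}}} :=
  [ffun S => if S \in T then [set X in C | S \subset X] else set0].

Lemma decomp C : cont C T -> C = \bigcup_(S in T) f1 C S.
Proof.
move=> /forall_inP cCT; apply/setP => X; apply/idP/bigcupP => [XC|[S ST]].
  case/exists_inP: (cCT X XC) => S ST SX; exists S => //.
  by rewrite ffunE ST inE XC SX.
by rewrite ffunE ST inE => /andP [].
Qed.

Lemma iso1 : poset_iso (idealL d T) (@leL _ d) (prodI d T) (@prodI_le n d T).
Proof.
exists f1; split.
- move=> C; rewrite idealE // => /andP [HC cCT]; apply/forallP => S.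
  rewrite ffunE; case ST: (S \in T) => //; rewrite idealE1 ?Td //; apply/andP; split.
    by apply: inL_sub HC _; apply/subsetP => X; rewrite inE => /andP [].
  by apply/forall_inP => X; rewrite inE => /andP [].
- move=> C C'; rewrite !idealE // => /andP [_ c1] /andP [_ c2] E.
  by rewrite (decomp c1) (decomp c2) E.
- move=> g Hg; set C := \bigcup_(S in T) g S.
  have memC X : X \in C -> exists2 S, S \in T & X \in g S by move/bigcupP.
  exists C.
    rewrite idealE //; apply/andP; split.
      apply: union_inL HT _ _; first by move=> S ST; case: (prodI_get Hg ST).
      by move=> S X ST; case: (prodI_get Hg ST) => _; apply.
    apply/forall_inP => X /memC [S ST XgS]; apply/exists_inP; exists S => //.
    by case: (prodI_get Hg ST) => _; apply.
  apply/ffunP => S; rewrite ffunE; case: ifP => ST; last by rewrite prodI_out // ST.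
  apply/setP => X; rewrite inE; apply/andP/idP => [[/memC [S' S'T XgS'] SX]|XgS].
    have [HS' sub'] := prodI_get Hg S'T.
    by rewrite (uniqT HT ST S'T SX (sub' X XgS') (inL_size HS' XgS')).
  split; first by apply/bigcupP; exists S.
  by case: (prodI_get Hg ST) => _; apply.
- move=> C C'; rewrite !idealE // => /andP [HC cCT] /andP [HC' cC'T].
  rewrite leL_cont // /prodI_le.
  have sub1 (D : {set {set 'I_n}}) (S : {set 'I_n}) : [set X in D | S \subset X] \subset D.
    by apply/subsetP => X; rewrite inE => /andP [].
  have -> : [forall S in T, leL d (f1 C S) (f1 C' S)] = [forall S in T, cont (f1 C S) (f1 C' S)].
    apply: eq_forallb => S; case: (boolP (S \in T)) => ST //=.
    by rewrite !ffunE ST; apply: leL_cont; [exact: inL_sub HC (sub1 _ _) | exact: inL_sub HC' (sub1 _ _)].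
  apply/idP/forall_inP => [H S ST|H].
    apply/forall_inP => X; rewrite ffunE ST inE => /andP [XC SX].
    case/exists_inP: (forall_inP H X XC) => Y YC' YX.
    case/exists_inP: (forall_inP cC'T Y YC') => S'' S''T S''Y.
    have E := uniqT HT ST S''T SX (subset_trans S''Y YX) (inL_size HC XC).
    apply/exists_inP; exists Y => //; rewrite ffunE ST inE YC' E //.
  apply/forall_inP => X XC.
  case/exists_inP: (forall_inP cCT X XC) => S ST SX.
  have : X \in f1 C S by rewrite ffunE ST inE XC SX.
  move/(forall_inP (H S ST)); case/exists_inP => Y; rewrite ffunE ST inE => /andP [YC' _] YX.
  by apply/exists_inP; exists Y.
Qed.


Ltac eSt := first [exact: eS_inj | exact: eS_out | exact: eS_sur | assumption | exact: Td].

Lemma inL_hS (S : {set 'I_n}) (D : {set {set 'I_n}}) : S \in T -> (forall X, X \in D -> S \subset X) ->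
  inL (d - #|S|) [set hh (@eS n S) X | X in D] = inL d D.
Proof. move=> ST H; apply: inL_h; eSt. Qed.

Lemma gh_collS (S : {set 'I_n}) (D : {set {set 'I_n}}) : (forall X, X \in D -> S \subset X) ->
  [set gg S (@eS n S) Y | Y in [set hh (@eS n S) X | X in D]] = D.
Proof. move=> H; apply: gh_coll; eSt. Qed.

Lemma hg_collS (S : {set 'I_n}) (E : {set {set 'I_(n - #|S|)}}) :
  [set hh (@eS n S) Y | Y in [set gg S (@eS n S) X | X in E]] = E.
Proof. apply: hg_coll; eSt. Qed.

Lemma cont_hS (S : {set 'I_n}) (D D' : {set {set 'I_n}}) : (forall X, X \in D -> S \subset X) ->
  (forall X, X \in D' -> S \subset X) ->
  cont [set hh (@eS n S) X | X in D] [set hh (@eS n S) X | X in D'] = cont D D'.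
Proof. move=> H H'; apply: cont_h; eSt. Qed.

Definition f3 (g : {ffun {set 'I_n} -> {set {set 'I_n}}}) : prodLtype n :=
  finfun (fun S : {set 'I_n} => [set hh (@eS n S) X | X in g S]).

Definition f3inv (y : prodLtype n) : {ffun {set 'I_n} -> {set {set 'I_n}}} :=
  [ffun S => if S \in T then [set gg S (@eS n S) Y | Y in y S] else set0].

Lemma iso3 : poset_iso (prodI d T) (@prodI_le n d T) (prodL d T) (@prodL_le n d T).
Proof.
exists f3; split.
- move=> g Hg; apply/forallP => S; rewrite ffunE; case: (boolP (S \in T)) => ST.
    have [H1 H2] := prodI_get Hg ST.
    by rewrite inL_hS.
  by rewrite prodI_out // imset0.
- move=> g g' Hg Hg' E; apply/ffunP => S.
  have := congr1 (fun F : prodLtype n => F S) E; rewrite /= !ffunE.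
  case: (boolP (S \in T)) => ST; last by rewrite !prodI_out.
  have [_ H2] := prodI_get Hg ST; have [_ H2'] := prodI_get Hg' ST.
  by move=> E'; rewrite -(gh_collS H2) E' gh_collS.
- move=> y Hy; exists (f3inv y).
    apply/forallP => S; rewrite ffunE; case ST: (S \in T) => //.
    have sup : forall X, X \in [set gg S (@eS n S) Y | Y in y S] -> S \subset X.
      by move=> X /imsetP [Y _ ->]; apply: gg_sup.
    rewrite idealE1 ?Td //; apply/andP; split; last by apply/forall_inP.
    by rewrite -(inL_hS ST sup) hg_collS; apply: prodL_get.
  apply/ffunP => S; rewrite !ffunE; case: (boolP (S \in T)) => ST.
    by rewrite hg_collS.
  by rewrite imset0 prodL_out.
- move=> g g' Hg Hg'; rewrite /prodI_le /prodL_le; apply: eq_forallb => S.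
  case: (boolP (S \in T)) => ST //=.
  have [H1 H2] := prodI_get Hg ST; have [H1' H2'] := prodI_get Hg' ST.
  rewrite !ffunE leL_cont // leL_cont ?inL_hS //.
  by rewrite cont_hS.
Qed.

End Main.

Theorem theorem3p1 (n d : nat) (T : {set {set 'I_n}}) :
  (d < n)%N -> inL d T -> T != set0 ->
  [/\ poset_iso (idealL d T) (@leL _ d) (prodI d T) (@prodI_le n d T),
      poset_iso (idealL d T) (@leL _ d) (prodL d T) (@prodL_le n d T) &
      poset_iso (prodI d T) (@prodI_le n d T) (prodL d T) (@prodL_le n d T)].
Proof.
move=> _ HT _; have I1 := iso1 HT; have I3 := iso3 HT.
split => //; exact: poset_iso_trans I1 I3.
Qed.
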